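(* Let $\hat P=\mathrm{Spec}(B)$ be an affine extension of a principal $\mathbb{G}_a$-bundle $P\to S_*$, with $D$ the locally nilpotent derivation of $B$ given by the $\mathbb{G}_a$-action. Then for every $\nu>0$ the zero locus in $S$ of the ideal $\mathfrak m_\nu(B)=D^\nu(\ker D^{\nu+1})\subset\mathcal O(S)$ is contained in $\{\mathbf x\}$; i.e. either all these ideals are $\mathfrak m_{\mathbf x}$-primary, or (in the remaining case) $\mathrm{gr}_D(B)=\mathcal O(S)[t]$.
   Context: All varieties are over $\mathbb{C}$. $S$ normal affine surface, $\mathbf{x}\in S$ a closed regular point with maximal ideal $\mathfrak m_{\mathbf x}$, $S_*=S\setminus\{\mathbf{x}\}$. An affine extension of $\pi\colon P\to S_*$ is a normal affine $\mathbb{G}_a$-variety $\hat P=\mathrm{Spec}(B)$ with a morphism $\hat\pi\colon\hat P\to S$ and a $\mathbb{G}_a$-equivariant dominant open embedding $\iota\colon P\hookrightarrow\hat P$ with $\iota(P)=\hat\pi^{-1}(S_* )$ and $\hat\pi\circ\iota=\pi$. Here $\ker D=\mathcal O(S)$. $\mathrm{gr}_D(B)=\bigoplus_\nu \ker D^{\nu+1}/\ker D^\nu\simeq\bigoplus_\nu\mathfrak m_\nu(B)t^\nu\subset\mathcal O(S)[t]$ via $b\mapsto \frac{D^\nu b}{\nu!}t^\nu$. *)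

(* Defs.v *)
From HB Require Import structures.
From mathcomp Require Import all_boot all_order all_algebra.
Set Implicit Arguments. Unset Strict Implicit. Unset Printing Implicit Defensive.
Import GRing.Theory.
Local Open Scope ring_scope.

Section AffineExtensions.
Context {F : fieldType} {B : comAlgType F}.

Definition is_domain : Prop := forall a b : B, a * b = 0 -> a = 0 \/ b = 0.

Inductive alg_gen (s : seq B) : B -> Prop :=
| ag_mem x : x \in s -> alg_gen s x
| ag_scal (c : F) : alg_gen s (c%:A)
| ag_add x y : alg_gen s x -> alg_gen s y -> alg_gen s (x + y)
| ag_mul x y : alg_gen s x -> alg_gen s y -> alg_gen s (x * y).

Definition fin_gen (R : B -> Prop) : Prop :=
  exists s : seq B, (forall x, x \in s -> R x) /\ (forall a, R a -> alg_gen s a).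

(** the domain R is integrally closed in its fraction field (computed inside
    Frac B): if a/c (a, c in R, c <> 0) is a root of a monic polynomial with
    coefficients in R, then c divides a in R *)
Definition int_closed (R : B -> Prop) : Prop :=
  forall a c, R a -> R c -> c <> 0 ->
  (exists (n : nat) (r : nat -> B), (forall i, R (r i)) /\
      a ^+ n + \sum_(i < n) r i * a ^+ i * c ^+ (n - i) = 0) ->
  exists d, R d /\ a = c * d.

Definition ideal_of (R I : B -> Prop) : Prop :=
  (forall x, I x -> R x) /\ I 0 /\ (forall x y, I x -> I y -> I (x + y)) /\
  (forall a x, R a -> I x -> I (a * x)).

Definition prime_ideal_of (R I : B -> Prop) : Prop :=
  ideal_of R I /\ ~ I 1 /\ (forall a b, R a -> R b -> I (a * b) -> I a \/ I b).

Definition maximal_ideal_of (R I : B -> Prop) : Prop :=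
  ideal_of R I /\ ~ I 1 /\
  (forall J, ideal_of R J -> (forall x, I x -> J x) ->
     (forall x, J x <-> I x) \/ J 1).

Definition same_set (I J : B -> Prop) : Prop := forall x, I x <-> J x.

Definition strict_incl (I J : B -> Prop) : Prop :=
  (forall x, I x -> J x) /\ exists x, J x /\ ~ I x.

Definition krull_dim2 (R : B -> Prop) : Prop :=
  (exists p0 p1 p2, prime_ideal_of R p0 /\ prime_ideal_of R p1 /\
     prime_ideal_of R p2 /\ strict_incl p0 p1 /\ strict_incl p1 p2) /\
  ~ (exists p0 p1 p2 p3, prime_ideal_of R p0 /\ prime_ideal_of R p1 /\
     prime_ideal_of R p2 /\ prime_ideal_of R p3 /\
     strict_incl p0 p1 /\ strict_incl p1 p2 /\ strict_incl p2 p3).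

Definition normal_affine_surface (R : B -> Prop) : Prop :=
  fin_gen R /\ int_closed R /\ krull_dim2 R.

Definition ideal_sq (m : B -> Prop) (y : B) : Prop :=
  exists s : seq (B * B), (forall p, p \in s -> m p.1 /\ m p.2) /\
    y = \sum_(p <- s) p.1 * p.2.

(** regularity of the closed point m of the surface: dim_F (m / m^2) = 2
    (the residue field is F, and the local ring has dimension 2) *)
Definition regular_point (m : B -> Prop) : Prop :=
  exists u v, m u /\ m v /\
    (forall y, m y -> exists al be : F, ideal_sq m (y - (al *: u + be *: v))) /\
    (forall al be : F, ideal_sq m (al *: u + be *: v) -> al = 0 /\ be = 0).

Definition is_derivation (D : B -> B) : Prop :=
  (forall a b, D (a + b) = D a + D b) /\ (forall (c : F) a, D (c *: a) = c *: D a) /\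
  (forall a b, D (a * b) = a * D b + D a * b).

Definition locally_nilpotent (D : B -> B) : Prop :=
  forall b, exists n, iter n D b = 0.

Definition kerD (D : B -> B) (b : B) : Prop := D b = 0.

(** m_nu(B) = D^nu (ker D^(nu+1)), a subset of ker D = O(S) *)
Definition m_nu (D : B -> B) (nu : nat) (a : B) : Prop :=
  exists b, iter nu.+1 D b = 0 /\ a = iter nu D b.

(** Spec B restricted over the basic open D(f) of S is D(f) x G_a, G_a acting
    by translation:  B_f = (ker D)_f [s] with D s = 1, where s = b / f^k. *)
Definition trivial_over (D : B -> B) (f : B) : Prop :=
  exists (b : B) (k : nat), D b = f ^+ k /\
    forall c : B, exists (N : nat) (r : seq B), (forall x, x \in r -> kerD D x) /\
      f ^+ N * c = \sum_(i < size r) r`_i * b ^+ i.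

(** Spec B over S_* = Spec(ker D) \ {m} is a principal G_a-bundle:
    every (scheme-theoretic) point of S_* has a trivializing basic open nbhd. *)
Definition principal_over_punctured (D : B -> B) (m : B -> Prop) : Prop :=
  forall p, prime_ideal_of (kerD D) p -> ~ same_set p m ->
    exists f, kerD D f /\ ~ p f /\ trivial_over D f.

End AffineExtensions.

(* Main.v *)
Require Import Defs.
From HB Require Import structures.
From mathcomp Require Import all_boot all_order all_algebra.
From Stdlib Require Import Classical.
From mathcomp Require Import ring.
Import GRing.Theory.
Local Open Scope ring_scope.

Lemma unit_aux (F : fieldType) (B : comAlgType F) (n : nat) (nz : (n%:R : F) != 0) :
  (1 : B) = ((n%:R : F)^-1 *: 1) * n%:R.
Proof.
have E : (n%:R : B) = (n%:R : F) *: 1 by rewrite scaler_nat.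
rewrite -scalerAl mul1r.
rewrite [X in _ *: X]E.
by rewrite scalerA mulVf // scale1r.
Qed.

Lemma gen_aux (F : fieldType) (HF : [pchar F] =i pred0) (B : comAlgType F)
  (D : B -> B) (HD : is_derivation D) (nu : nat) (p : B -> Prop) (f b : B) (k : nat) :
  D f = 0 -> ~ p f -> D b = f ^+ k -> prime_ideal_of (kerD D) p ->
  (forall a, m_nu D nu a -> p a) -> False.
Proof.
move=> Kf pf Db Hp Hm.
case: HD => Dadd [Dscal Dmul].
case: Hp => [[pR [p0 [padd pmul]]] [p1 pprime]].
have D1 : D 1 = 0.
  have := Dmul 1 1; rewrite !mulr1 mul1r => H.
  by apply: (addrI (D 1)); rewrite addr0 -H.
have Dnat : forall n : nat, D n%:R = 0.
  have D0 : D 0 = 0.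
    have := Dadd 0 0; rewrite addr0 => H.
    by apply: (addrI (D 0)); rewrite addr0 -H.
  elim=> [|n IH]; first by rewrite mulr0n D0.
  by rewrite mulrS Dadd D1 IH add0r.
have Dx : forall x y : B, D x = 0 -> D (x * y) = x * D y.
  by move=> x y Hx; rewrite Dmul Hx mul0r addr0.
have Dexp : forall x : B, D x = 0 -> forall n, D (x ^+ n) = 0.
  move=> x Hx; elim=> [|n IH]; first by rewrite expr0.
  by rewrite exprS Dx // IH mulr0.
set g := f ^+ k.
have Dg : D g = 0 by apply: Dexp.
have Dbn : forall n, D (b ^+ n.+1) = n.+1%:R * g * b ^+ n.
  elim=> [|n IH]; first by rewrite expr1 expr0 mulr1 mul1r.
  rewrite exprS Dmul IH Db -/g.
  rewrite [n.+2%:R]mulrS [b ^+ n.+1]exprS; ring.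
have iterc : forall c x j, D c = 0 -> iter j D (c * x) = c * iter j D x.
  move=> c x j Hc; elim: j => [//|j IH]; by rewrite !iterS IH Dx.
have key : forall j, iter j D (b ^+ j) = j`!%:R * g ^+ j /\ iter j.+1 D (b ^+ j) = 0.
  elim=> [|j [IH1 IH2]].
    by rewrite /= !expr0 D1 mulr1 fact0.
  have E : iter j.+1 D (b ^+ j.+1) = j.+1`!%:R * g ^+ j.+1.
    have Hc : D (j.+1%:R * g) = 0 by rewrite Dx ?Dnat // Dg mulr0.
    rewrite iterSr Dbn (iterc _ _ _ Hc) IH1 factS natrM exprSr; ring.
  split=> //; by rewrite iterS E Dx ?Dnat // Dexp // mulr0.
have [K1 K2] := key nu.
have pa : p (nu`!%:R * g ^+ nu) by apply: Hm; exists (b ^+ nu); rewrite K1.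
have [pn|pg] := pprime _ _ (Dnat _) (Dexp _ Dg _) pa.
  apply: p1.
  have nz : (nu`!%:R : F) != 0 by rewrite (pcharf0P F).1 // -lt0n fact_gt0.
  have -> : (1 : B) = ((nu`!%:R : F)^-1 *: 1) * nu`!%:R.
    exact: unit_aux.
  apply: pmul => //; by rewrite /kerD Dscal D1 scaler0.
have pow : forall x n, D x = 0 -> p (x ^+ n) -> p x.
  move=> x; elim=> [|n IH] Hx; first by rewrite expr0 => /p1.
  rewrite exprS => /(pprime _ _ Hx (Dexp _ Hx _)); case=> //; exact: IH.
exact: pf (pow _ _ Kf (pow _ _ Dg pg)).
Qed.

Theorem mainTheorem10
  (F : closedFieldType) (HF : [pchar F] =i pred0)
  (B : comAlgType F)
  (HBdom : @is_domain F B) (HBfg : fin_gen (fun _ : B => True))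
  (HBnorm : int_closed (fun _ : B => True))
  (D : B -> B) (HD : is_derivation D) (HDlnd : locally_nilpotent D)
  (HS : normal_affine_surface (kerD D))
  (mx : B -> Prop) (Hmx : maximal_ideal_of (kerD D) mx) (Hreg : regular_point mx)
  (Hbundle : principal_over_punctured D mx) :
  forall nu : nat, (0 < nu)%N ->
    forall p : B -> Prop, prime_ideal_of (kerD D) p ->
      (forall a, m_nu D nu a -> p a) -> same_set p mx.
Proof.
move=> nu _ p Hp Hm.
apply: NNPP => Hne.
have [f [Kf [pf [b [k [Db _]]]]]] := Hbundle p Hp Hne.
exact: (@gen_aux F HF B D HD nu p f b k Kf pf Db Hp Hm).
Qed.
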